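(* Define $A_0:=1$ and, for integers $m\ge1$, $A_m:=\frac{1\cdot3\cdot5\cdots(2m-1)}{m!}=\frac{(2m)!}{2^m(m!)^2}$. For integers $m,n\ge0$ and $0\le r\le\min(m,n)$ set $$A_{m,n}^r:=\frac{A_{m-r}A_rA_{n-r}}{A_{n+m-r}}\cdot\frac{2n+2m-4r+1}{2n+2m-2r+1},\qquad B_{m,n}^r:=\frac{\sqrt{(2m+1)(2n+1)}}{2m+2n-4r+1}\,A_{m,n}^r .$$ Then there is a constant $C>0$ such that $B_{m,n}^r\le C$ for all integers $m,n\ge0$ and all $0\le r\le\min(m,n)$. *)

(* Defs.v *)
From Stdlib Require Import Arith Reals Lra Lia.
Open Scope R_scope.

(* A_m = (2m)! / (2^m (m!)^2); for m = 0 this equals 1 = A_0. *)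
Definition A (m : nat) : R :=
  INR (Factorial.fact (2 * m)) / (2 ^ m * (INR (Factorial.fact m)) ^ 2).

(* A_{m,n}^r, for r <= min(m,n) (natural subtraction is exact there). *)
Definition Amnr (m n r : nat) : R :=
  (A (m - r) * A r * A (n - r) / A (n + m - r)) *
  ((2 * INR n + 2 * INR m - 4 * INR r + 1) /
   (2 * INR n + 2 * INR m - 2 * INR r + 1)).

Definition Bmnr (m n r : nat) : R :=
  sqrt ((2 * INR m + 1) * (2 * INR n + 1)) /
  (2 * INR m + 2 * INR n - 4 * INR r + 1) * Amnr m n r.

(* Main.v *)
Require Import Defs.
From Stdlib Require Import Reals Lra Lia Psatz.
Open Scope R_scope.

Lemma fS n : Factorial.fact (S n) = (S n * Factorial.fact n)%nat.
Proof. reflexivity. Qed.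

Lemma A_S k : A (S k) = A k * (2 * INR k + 1) / (INR k + 1).
Proof.
  unfold A.
  replace (2 * S k)%nat with (S (S (2 * k))) by lia.
  rewrite !fS.
  rewrite !mult_INR, !S_INR, mult_INR.
  simpl INR at 1 3. 
  pose proof (INR_fact_neq_0 (2*k)). pose proof (INR_fact_neq_0 k).
  pose proof (pos_INR k).
  simpl pow. field. repeat split; try lra. apply pow_nonzero; lra.
Qed.

Lemma A_pos k : 0 < A k.
Proof.
  unfold A. apply Rdiv_lt_0_compat. apply lt_0_INR, Factorial.lt_O_fact.
  apply Rmult_lt_0_compat. apply pow_lt; lra.
  apply pow_lt, lt_0_INR, Factorial.lt_O_fact.
Qed.

Lemma div_le1 n d : 0 < d -> n <= d -> n / d <= 1.
Proof. intros. apply (Rmult_le_reg_r d); auto. unfold Rdiv. rewrite Rmult_assoc, Rinv_l; lra. Qed.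
Lemma div_ge1 n d : 0 < d -> d <= n -> 1 <= n / d.
Proof. intros. apply (Rmult_le_reg_r d); auto. unfold Rdiv. rewrite Rmult_assoc, Rinv_l; lra. Qed.

Definition q k := A k ^ 2 / 4 ^ k.

Lemma q_S k : q (S k) = q k * ((2 * INR k + 1) ^ 2 / (4 * (INR k + 1) ^ 2)).
Proof.
  unfold q. rewrite A_S. pose proof (pos_INR k). simpl pow. field.
  split; try lra. apply pow_nonzero; lra.
Qed.

Lemma q_up k : q k * (INR k + 1) <= 1.
Proof.
  induction k.
  - unfold q, A. simpl. lra.
  - rewrite q_S, S_INR. pose proof (pos_INR k).
    assert (0 <= q k) by (unfold q; apply Rmult_le_pos; [apply pow2_ge_0| left; apply Rinv_0_lt_compat, pow_lt; lra]).
    set (x := INR k) in *.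
    assert (q k * ((2 * x + 1) ^ 2 / (4 * (x + 1) ^ 2)) * (x + 1 + 1)
            = (q k * (x+1)) * ((2 * x + 1) ^ 2 * (x+2) / (4 * (x + 1) ^ 3))) as -> by (field; lra).
    assert ((2 * x + 1) ^ 2 * (x+2) / (4 * (x + 1) ^ 3) <= 1).
    { apply div_le1. nra. nra. }
    assert (0 <= (2 * x + 1) ^ 2 * (x+2) / (4 * (x + 1) ^ 3)).
    { unfold Rdiv; apply Rmult_le_pos; [nra| left; apply Rinv_0_lt_compat; nra]. }
    nra.
Qed.

Lemma q_low k : 1 <= q k * (4 * INR k + 1).
Proof.
  induction k.
  - unfold q, A. simpl. lra.
  - rewrite q_S, S_INR. pose proof (pos_INR k).
    set (x := INR k) in *.
    assert (q k * ((2 * x + 1) ^ 2 / (4 * (x + 1) ^ 2)) * (4 * (x + 1) + 1)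
            = (q k * (4*x+1)) * ((2 * x + 1) ^ 2 * (4*x+5) / (4 * (x + 1) ^ 2 * (4*x+1)))) as -> by (field; lra).
    assert (1 <= (2 * x + 1) ^ 2 * (4*x+5) / (4 * (x + 1) ^ 2 * (4*x+1))).
    { apply div_ge1. nra. nra. }
    nra.
Qed.

Lemma q_nonneg k : 0 <= q k.
Proof. unfold q. apply Rmult_le_pos; [apply pow2_ge_0| left; apply Rinv_0_lt_compat, pow_lt; lra]. Qed.

Lemma Asq k : A k ^ 2 = q k * 4 ^ k.
Proof. unfold q. field. apply pow_nonzero; lra. Qed.

Lemma key a r c : 
  let P := (2 * (INR r + INR a) + 1) * (2 * (INR r + INR c) + 1) in
  let N := INR a + INR r + INR c in
  P * (q a * q r * q c) <= 4 * (2 * N + 1) ^ 2 * q (a + r + c)%nat.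
Proof.
  intros P N.
  pose proof (pos_INR a). pose proof (pos_INR r). pose proof (pos_INR c).
  pose proof (q_up a). pose proof (q_up r). pose proof (q_up c).
  pose proof (q_low (a + r + c)) as HL. rewrite !plus_INR in HL. fold N in HL.
  pose proof (q_nonneg a). pose proof (q_nonneg r). pose proof (q_nonneg c).
  set (K := (INR a + 1) * (INR r + 1) * (INR c + 1)).
  set (Q := q a * q r * q c).
  assert (HK : 0 < K) by (unfold K; repeat apply Rmult_lt_0_compat; lra).
  assert (HQK : Q * K <= 1).
  { unfold Q, K.
    replace (q a * q r * q c * ((INR a + 1) * (INR r + 1) * (INR c + 1)))
      with ((q a * (INR a + 1)) * (q r * (INR r + 1)) * (q c * (INR c + 1))) by ring.
    assert (0 <= q a * (INR a + 1)) by nra.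
    assert (0 <= q r * (INR r + 1)) by nra.
    assert (0 <= q c * (INR c + 1)) by nra.
    assert ((q a * (INR a + 1)) * (q r * (INR r + 1)) <= 1) by nra.
    nra. }
  assert (HP : P * (4 * N + 1) <= 4 * (2 * N + 1) ^ 2 * K).
  { unfold P, N, K.
    set (x := INR a) in *. set (y := INR r) in *. set (z := INR c) in *.
    assert (h1 : 2 * (y + x) + 1 <= 2 * ((x+1)*(y+1))) by nra.
    assert (h2 : 2 * (y + z) + 1 <= (2 * (x+y+z) + 1) * (z+1)) by nra.
    assert (h3 : 4 * (x+y+z) + 1 <= 2 * (2 * (x+y+z) + 1)) by nra.
    assert (0 <= 2 * (y + x) + 1) by lra.
    assert (0 <= 2 * (y + z) + 1) by lra.
    assert (0 <= 4 * (x+y+z) + 1) by lra.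
    assert (h12 : (2 * (y + x) + 1) * (2 * (y + z) + 1) <= 2 * ((x+1)*(y+1)) * ((2 * (x+y+z) + 1) * (z+1))).
    { apply Rmult_le_compat; auto. }
    assert ((2 * (y + x) + 1) * (2 * (y + z) + 1) * (4 * (x+y+z) + 1) <=
            2 * ((x+1)*(y+1)) * ((2 * (x+y+z) + 1) * (z+1)) * (2 * (2 * (x+y+z) + 1))).
    { apply Rmult_le_compat; auto. nra. }
    nra. }
  assert (HPpos : 0 <= P) by (unfold P; nra).
  assert (HNpos : 0 < 4 * N + 1) by (unfold N; lra).
  assert (Hs : P * Q * (4 * N + 1) <= 4 * (2 * N + 1) ^ 2).
  { apply (Rmult_le_reg_r K); auto.
    assert (P * (4*N+1) * (Q * K) <= P * (4*N+1) * 1).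
    { apply Rmult_le_compat_l; nra. }
    nra. }
  apply (Rmult_le_reg_r (4 * N + 1)); auto.
  assert (0 <= 4 * (2 * N + 1) ^ 2) by nra.
  assert (4 * (2 * N + 1) ^ 2 * 1 <= 4 * (2 * N + 1) ^ 2 * (q (a + r + c) * (4 * N + 1))).
  { apply Rmult_le_compat_l; lra. }
  nra.
Qed.

Theorem mainTheorem1 :
  exists C : R, 0 < C /\
    forall m n r : nat, (r <= Nat.min m n)%nat -> Bmnr m n r <= C.
Proof.
  exists 2. split; [lra|]. intros m n r Hr.
  destruct (Nat.le_exists_sub r m) as [a [Ha _]]; [lia|].
  destruct (Nat.le_exists_sub r n) as [c [Hc _]]; [lia|].
  subst m n.
  unfold Bmnr, Amnr.
  replace (a + r - r)%nat with a by lia.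
  replace (c + r - r)%nat with c by lia.
  replace (c + r + (a + r) - r)%nat with (a + r + c)%nat by lia.
  rewrite !plus_INR.
  pose proof (pos_INR a). pose proof (pos_INR r). pose proof (pos_INR c).
  pose proof (A_pos a). pose proof (A_pos r). pose proof (A_pos c). pose proof (A_pos (a + r + c)).
  set (X := A a * A r * A c / A (a + r + c)).
  assert (HX : 0 < X).
  { unfold X, Rdiv. apply Rmult_lt_0_compat.
    - apply Rmult_lt_0_compat; [apply Rmult_lt_0_compat|]; assumption.
    - apply Rinv_0_lt_compat; lra. }
  set (P := (2 * (INR a + INR r) + 1) * (2 * (INR c + INR r) + 1)).
  set (N := INR a + INR r + INR c).
  assert (HP : 0 <= P) by (unfold P; nra).
  replace (sqrt P / (2 * (INR a + INR r) + 2 * (INR c + INR r) - 4 * INR r + 1) *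
    (X * ((2 * (INR c + INR r) + 2 * (INR a + INR r) - 4 * INR r + 1) /
      (2 * (INR c + INR r) + 2 * (INR a + INR r) - 2 * INR r + 1))))
    with (sqrt P * X / (2 * N + 1)) by (unfold N; field; lra).
  assert (HE : 0 < 2 * N + 1) by (unfold N; lra).
  apply (Rmult_le_reg_r (2 * N + 1)); auto.
  unfold Rdiv. rewrite Rmult_assoc, Rinv_l, Rmult_1_r by lra.
  apply Rsqr_incr_0_var; [| lra].
  unfold Rsqr.
  replace (sqrt P * X * (sqrt P * X)) with ((sqrt P * sqrt P) * X ^ 2) by ring.
  rewrite sqrt_sqrt by auto.
  assert (HX2 : X ^ 2 = q a * q r * q c / q (a + r + c)).
  { unfold X. unfold Rdiv. rewrite !Rpow_mult_distr, pow_inv, !Asq, !pow_add.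
    assert (0 < q (a + r + c)).
    { pose proof (q_low (a+r+c)). pose proof (q_nonneg (a+r+c)). destruct H7; auto.
      rewrite <- H7 in H6. lra. }
    field. split; try lra. repeat split; apply pow_nonzero; lra. }
  rewrite HX2.
  pose proof (key a r c) as K. simpl in K.
  assert (0 < q (a + r + c)).
  { pose proof (q_low (a+r+c)). pose proof (q_nonneg (a+r+c)). destruct H7; auto.
    rewrite <- H7 in H6. lra. }
  replace P with ((2 * (INR r + INR a) + 1) * (2 * (INR r + INR c) + 1)) by (unfold P; ring).
  apply (Rmult_le_reg_r (q (a + r + c))); auto.
  unfold Rdiv. replace (((2 * (INR r + INR a) + 1) * (2 * (INR r + INR c) + 1) *
   (q a * q r * q c * / q (a + r + c))) * q (a + r + c)) with
   ((2 * (INR r + INR a) + 1) * (2 * (INR r + INR c) + 1) * (q a * q r * q c)) by (field; lra).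
  unfold N. nra.
Qed.
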